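(* Let $(\mathbf{X},Y,\hat Y)$ be random variables on $\mathcal{X}\times\mathcal{Y}\times\mathcal{Y}$ with $P(\hat Y=i\mid Y=j)=p_{i,j}$ for all $i,j\in\{1,\dots,K\}$ (so $\sum_{i=1}^K p_{i,j}=1$ for each $j$), and assume $\hat Y$ is conditionally independent of $\mathbf{X}$ given $Y$ (i.e. $P(\mathbf{X}\mid Y)=P(\mathbf{X}\mid Y,\hat Y)$), so that $P(\hat Y=i\mid\mathbf{X})=\sum_{j=1}^K p_{i,j}P(Y=j\mid\mathbf{X})$. Let $Q$ be any probability distribution on a hypothesis class $\mathcal{H}$ and let $\hat M$ be a random variable such that, conditionally on $\mathbf{X}=\mathbf{x}$, $\hat M$ is discrete and equals $M_Q(\mathbf{x},i)$ with probability $P(\hat Y=i\mid\mathbf{X}=\mathbf{x})$, $i=1,\dots,K$. Let $\mu^{\hat M}_1=\mathbb{E}[\hat M]$, $\mu^{\hat M}_2=\mathbb{E}[\hat M^2]$, and $\gamma=\sum_{j=1}^K\max_{i\in\{1,\dots,K\}}p_{i,j}$. If $\mu^{\hat M}_1>0$, then $$R(B_{Q_{\mathrm{opt}}})\le 1-\frac{1}{\gamma}\cdot\frac{(\mu^{\hat M}_1)^2}{\mu^{\hat M}_2}.$$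
   Context: $\mathcal{X}\subset\mathbb{R}^d$, $\mathcal{Y}=\{1,\dots,K\}$, $K\ge2$; $\mathcal{H}$ is a class of classifiers $h:\mathcal{X}\to\mathcal{Y}$. For a distribution $Q$ on $\mathcal{H}$: votes $v_Q(\mathbf{x},c)=\mathbb{E}_{h\sim Q}\mathbb{1}[h(\mathbf{x})=c]$, margin $M_Q(\mathbf{x},y)=v_Q(\mathbf{x},y)-\max_{c\ne y}v_Q(\mathbf{x},c)$. $B_{Q_{\mathrm{opt}}}$ denotes the optimal (maximum a posteriori) classifier $B_{Q_{\mathrm{opt}}}(\mathbf{x})=\arg\max_{c\in\mathcal{Y}}P(Y=c\mid\mathbf{X}=\mathbf{x})$, whose risk with respect to the true label is $R(B_{Q_{\mathrm{opt}}})=\mathbb{E}_{\mathbf{X}}\big[1-\max_{j}P(Y=j\mid\mathbf{X})\big]$. $\hat Y$ is an imperfect (noisy) version of the label $Y$. *)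

(* Defs.v *)
From HB Require Import structures.
From mathcomp Require Import all_boot all_order all_algebra.
Set Implicit Arguments. Unset Strict Implicit. Unset Printing Implicit Defensive.
Import Order.TTheory GRing.Theory Num.Theory.
Local Open Scope ring_scope.

(* An expectation operator on a (bounded-)measurable class of real functions:
   [meas] plays the role of "bounded measurable functions" and [E] of the
   integral w.r.t. a probability measure.  Every genuine probability space
   (with meas = bounded measurable functions) satisfies these axioms. *)
Definition is_expectation (T : Type) (R : realFieldType)
  (meas : (T -> R) -> Prop) (E : (T -> R) -> R) : Prop :=
  (forall c : R, meas (fun _ => c)) /\
  (forall f g, meas f -> meas g -> meas (fun x => f x + g x)) /\
  (forall f g, meas f -> meas g -> meas (fun x => f x * g x)) /\
  (forall f g, meas f -> meas g -> meas (fun x => Num.max (f x) (g x))) /\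
  (forall f, meas f -> meas (fun x => if 0 < f x then 1 else 0)) /\
  (forall (a : R) f g, meas f -> meas g ->
       E (fun x => a * f x + g x) = a * E f + E g) /\
  (forall f g, meas f -> meas g -> (forall x, f x <= g x) -> E f <= E g) /\
  E (fun _ => 1) = 1.

Section Defs.
Variables (R : realFieldType) (K : nat) (T H : Type).

Definition vote (EQ : (H -> R) -> R) (cls : H -> T -> 'I_K) (x : T) (c : 'I_K) : R :=
  EQ (fun h => if cls h x == c then 1 else 0).

(* margin M_Q(x,y) = v_Q(x,y) - max_{c <> y} v_Q(x,c)  (votes are >= 0, K >= 2) *)
Definition margin EQ cls (x : T) (y : 'I_K) : R :=
  vote EQ cls x y - \big[Num.max/0]_(c | c != y) vote EQ cls x c.

Definition noisy_post (p : 'I_K -> 'I_K -> R) (eta : T -> 'I_K -> R) (x : T) (i : 'I_K) : R :=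
  \sum_(j < K) p i j * eta x j.

(* mu_1 = E[Mhat] = E_X[ sum_i P(Yhat=i|X) M_Q(X,i) ] *)
Definition mu1 (E : (T -> R) -> R) p eta EQ cls : R :=
  E (fun x => \sum_(i < K) noisy_post p eta x i * margin EQ cls x i).

(* mu_2 = E[Mhat^2] = E_X[ sum_i P(Yhat=i|X) M_Q(X,i)^2 ] *)
Definition mu2 (E : (T -> R) -> R) p eta EQ cls : R :=
  E (fun x => \sum_(i < K) noisy_post p eta x i * (margin EQ cls x i) ^+ 2).

Definition gamma (p : 'I_K -> 'I_K -> R) : R :=
  \sum_(j < K) \big[Num.max/0]_(i < K) p i j.

(* R(B_{Q_opt}) = E_X[ 1 - max_j P(Y=j|X) ] *)
Definition risk_opt (E : (T -> R) -> R) (eta : T -> 'I_K -> R) : R :=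
  E (fun x => 1 - \big[Num.max/0]_(j < K) eta x j).

End Defs.

(* Main.v *)
Require Import Defs.
From HB Require Import structures.
From mathcomp Require Import all_boot all_order all_algebra.
From mathcomp Require Import ring lra.
From Stdlib Require Import FunctionalExtensionality.
Import Order.TTheory GRing.Theory Num.Theory.
Local Open Scope ring_scope.

Lemma meas_big (T : Type) (R : realFieldType) (meas : (T -> R) -> Prop)
  (op : R -> R -> R) (idx : R) (I : Type) (r : seq I) (P : pred I) (F : I -> T -> R) :
  meas (fun _ => idx) ->
  (forall f g, meas f -> meas g -> meas (fun x => op (f x) (g x))) ->
  (forall i, meas (F i)) ->
  meas (fun x => \big[op/idx]_(i <- r | P i) F i x).
Proof.
move=> h0 hop hF; elim: r => [|i r IH].
  rewrite (_ : (fun x => _) = fun _ => idx) //.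
  by apply: functional_extensionality => x; rewrite big_nil.
case Pi: (P i).
  rewrite (_ : (fun x => _) = fun x => op (F i x) (\big[op/idx]_(j <- r | P j) F j x)).
    exact: hop.
  by apply: functional_extensionality => x; rewrite big_cons Pi.
rewrite (_ : (fun x => _) = fun x => (\big[op/idx]_(j <- r | P j) F j x)) //.
by apply: functional_extensionality => x; rewrite big_cons Pi.
Qed.

Section Exp.
Variables (T : Type) (R : realFieldType) (meas : (T -> R) -> Prop) (E : (T -> R) -> R).
Hypothesis hE : is_expectation meas E.

Lemma meas_cst c : meas (fun _ => c). Proof. by move: hE => [h _]. Qed.
Lemma meas_add f g : meas f -> meas g -> meas (fun x => f x + g x).
Proof. by move: hE => [_ [h _]]; exact: h. Qed.
Lemma meas_mul f g : meas f -> meas g -> meas (fun x => f x * g x).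
Proof. by move: hE => [_ [_ [h _]]]; exact: h. Qed.
Lemma meas_max f g : meas f -> meas g -> meas (fun x => Num.max (f x) (g x)).
Proof. by move: hE => [_ [_ [_ [h _]]]]; exact: h. Qed.
Lemma meas_scale a f : meas f -> meas (fun x => a * f x).
Proof. by move=> hf; apply: meas_mul => //; apply: meas_cst. Qed.
Lemma meas_opp f : meas f -> meas (fun x => - f x).
Proof.
move=> hf; rewrite (_ : (fun x => _) = fun x => (-1) * f x); first exact: meas_scale.
by apply: functional_extensionality => x; rewrite mulN1r.
Qed.
Lemma E_lin0 a f g : meas f -> meas g -> E (fun x => a * f x + g x) = a * E f + E g.
Proof. by move: hE => [_ [_ [_ [_ [_ [H _]]]]]]; apply: H. Qed.
Lemma E_mono f g : meas f -> meas g -> (forall x, f x <= g x) -> E f <= E g.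
Proof. by move: hE => [_ [_ [_ [_ [_ [_ [H _]]]]]]]; apply: H. Qed.
Lemma E1 : E (fun _ => 1) = 1.
Proof. by move: hE => [_ [_ [_ [_ [_ [_ [_ H]]]]]]]. Qed.
Lemma E0 : E (fun _ => 0) = 0.
Proof.
have := @E_lin0 1 (fun _ => 0) (fun _ => 0) (meas_cst 0) (meas_cst 0).
rewrite (_ : (fun x => _) = fun _ => 0); last first.
  by apply: functional_extensionality => x; rewrite mulr0 addr0.
by rewrite mul1r => h; apply: (addrI (E (fun _ => 0))); rewrite addr0 -h.
Qed.
Lemma E_lin a b f g : meas f -> meas g ->
  E (fun x => a * f x + b * g x) = a * E f + b * E g.
Proof.
move=> hf hg; rewrite E_lin0 //; last exact: meas_scale.
congr (_ + _).
rewrite (_ : (fun x => _) = fun x => b * g x + 0).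
  by rewrite (@E_lin0 b g (fun _ => 0) hg (meas_cst 0)) E0 addr0.
by apply: functional_extensionality => x; rewrite addr0.
Qed.
End Exp.
Arguments meas_cst {T R meas E}.
Arguments meas_add {T R meas E}.
Arguments meas_mul {T R meas E}.
Arguments meas_max {T R meas E}.
Arguments meas_scale {T R meas E}.
Arguments meas_opp {T R meas E}.
Arguments E_lin0 {T R meas E}.
Arguments E_mono {T R meas E}.
Arguments E1 {T R meas E}.
Arguments E0 {T R meas E}.
Arguments E_lin {T R meas E}.

Lemma term_bound (R : realFieldType) (q M l u : R) :
  0 < l -> 0 <= q -> 2 * l * u = 1 -> 0 <= u ->
  q * M <= l/2 * (q * M^+2) + u * (if 0 < M then q else 0).
Proof.
move=> l0 q0 e u0.
case: ifP => hM; last first.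
  rewrite mulr0 addr0; apply: (@le_trans _ _ 0).
    by rewrite mulr_ge0_le0 // leNgt hM.
  have l2 : 0 <= l / 2 by rewrite divr_ge0 // ltW.
  by rewrite mulr_ge0 // mulr_ge0 // sqr_ge0.
have h : 0 <= q * (u * (l * M - 1)^+2) by rewrite mulr_ge0 // mulr_ge0 // sqr_ge0.
have lu : l * u = 2^-1.
  apply: (@mulfI _ 2); first by rewrite pnatr_eq0.
  by rewrite mulrA e divff // pnatr_eq0.
have e2 : q * (u * (l * M - 1)^+2) = l/2 * (q * M^+2) + u * q - q * M.
  have -> : l / 2 = l * (l * u) by rewrite lu.
  have -> : q * M = q * M * (2 * (l * u)) by rewrite lu divff ?mulr1 // pnatr_eq0.
  ring.
by rewrite -subr_ge0 -e2.
Qed.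

Lemma ind_le_max (R : realFieldType) (K : nat) (q M : 'I_K -> R) :
  (forall i, 0 <= q i) -> (forall i k, i != k -> 0 < M i -> M k <= 0) ->
  \sum_(i < K) (if 0 < M i then q i else 0) <= \big[Num.max/0]_(i < K) q i.
Proof.
move=> q0 hM; case: (boolP [exists i, 0 < M i]).
  move/existsP=> [k Mk]; rewrite (bigD1 k) //= big1 ?addr0.
    by rewrite Mk le_bigmax.
  move=> i ik; case: ifP => // Mi; have := hM k i; rewrite eq_sym ik => /(_ isT Mk).
  by rewrite leNgt Mi.
move=> hn; rewrite big1; first exact: bigmax_ge_id.
move=> i _; case: ifP => // Mi; case/negP: hn; apply/existsP; by exists i.
Qed.

Theorem theorem2 (R : realFieldType) (K : nat) (T H : Type)
  (measX : (T -> R) -> Prop) (E : (T -> R) -> R)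
  (measQ : (H -> R) -> Prop) (EQ : (H -> R) -> R)
  (cls : H -> T -> 'I_K)
  (p : 'I_K -> 'I_K -> R) (eta : T -> 'I_K -> R) :
  (1 < K)%N ->
  is_expectation measX E ->
  is_expectation measQ EQ ->
  (forall (x : T) (c : 'I_K), measQ (fun h => if cls h x == c then 1 else 0)) ->
  (forall c : 'I_K, measX (fun x => vote EQ cls x c)) ->
  (forall i j, 0 <= p i j) ->
  (forall j, \sum_(i < K) p i j = 1) ->
  (forall x j, 0 <= eta x j) ->
  (forall x, \sum_(j < K) eta x j = 1) ->
  (forall j, measX (fun x => eta x j)) ->
  0 < mu1 E p eta EQ cls ->
  risk_opt E eta <=
    1 - (gamma p)^-1 * ((mu1 E p eta EQ cls) ^+ 2 / mu2 E p eta EQ cls).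
Proof.
move=> K1 hE _ _ hv p0 _ eta0 _ heta mu1p.
set q := noisy_post p eta.
set M := margin EQ cls.
set m := fun x => \big[Num.max/0]_(j < K) eta x j.
set g := gamma p.
set A := fun x => \sum_(i < K) q x i * M x i.
set B := fun x => \sum_(i < K) q x i * M x i ^+ 2.
have mq : forall i, measX (fun x => q x i).
  move=> i; apply: (@meas_big _ _ _ _ _ _ _ _ (fun j x => p i j * eta x j)).
  - exact: (meas_cst hE) _.
  - exact: (meas_add hE).
  - by move=> j; apply: (meas_scale hE) _ _ _.
have mM : forall i, measX (fun x => M x i).
  move=> i; apply: (meas_add hE) _ _ (hv i) _; apply: (meas_opp hE) _ _.
  apply: (@meas_big _ _ _ _ _ _ _ _ (fun c x => vote EQ cls x c)).
  - exact: (meas_cst hE) _.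
  - exact: (meas_max hE).
  - exact: hv.
have mA : measX A.
  apply: (@meas_big _ _ _ _ _ _ _ _ (fun i x => q x i * M x i)).
  - exact: (meas_cst hE) _.
  - exact: (meas_add hE).
  - by move=> i; apply: (meas_mul hE) _ _ (mq i) (mM i).
have mB : measX B.
  apply: (@meas_big _ _ _ _ _ _ _ _ (fun i x => q x i * M x i ^+ 2)).
  - exact: (meas_cst hE) _.
  - exact: (meas_add hE).
  - move=> i; apply: (meas_mul hE) _ _ (mq i) _.
    by apply: (meas_mul hE) _ _ (mM i) (mM i).
have mm : measX m.
  apply: (@meas_big _ _ _ _ _ _ _ _ (fun j x => eta x j)).
  - exact: (meas_cst hE) _.
  - exact: (meas_max hE).
  - exact: heta.
have q0 : forall x i, 0 <= q x i.
  by move=> x i; apply: sumr_ge0 => j _; apply: mulr_ge0.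
have m0 : forall x, 0 <= m x by move=> x; exact: bigmax_ge_id.
have pm0 : forall j, 0 <= \big[Num.max/0]_(i < K) p i j by move=> j; exact: bigmax_ge_id.
have g0 : 0 <= g by apply: sumr_ge0 => j _.
have hone : forall x i k, i != k -> 0 < M x i -> M x k <= 0.
  move=> x i k ik Mi.
  have h1 : vote EQ cls x k <= \big[Num.max/0]_(c | c != i) vote EQ cls x c.
    by apply: le_bigmax_cond; rewrite eq_sym.
  have h2 : vote EQ cls x i <= \big[Num.max/0]_(c | c != k) vote EQ cls x c.
    by apply: le_bigmax_cond.
  move: Mi; rewrite /M /margin; lra.
have qm : forall x, \big[Num.max/0]_(i < K) q x i <= g * m x.
  move=> x; apply: bigmax_le; first by rewrite mulr_ge0.
  move=> i _; rewrite /q /noisy_post /g /gamma mulr_suml.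
  apply: ler_sum => j _; apply: ler_pM => //.
    exact: le_bigmax.
  exact: (le_bigmax _ (fun j => eta x j)).
have Em0 : 0 <= E m.
  by rewrite -(E0 hE); apply: (E_mono hE) => //; exact: (meas_cst hE) _.
have mu20 : 0 <= mu2 E p eta EQ cls.
  rewrite -(E0 hE); apply: (E_mono hE) => //; first exact: (meas_cst hE) _.
  by move=> x; apply: sumr_ge0 => i _; apply: mulr_ge0 => //; apply: sqr_ge0.
set c := g * E m.
have c0 : 0 <= c by rewrite mulr_ge0.
have key : forall l, 0 < l -> 2 * l * mu1 E p eta EQ cls <= l ^+ 2 * mu2 E p eta EQ cls + c.
  move=> l l0.
  set u := (2 * l)^-1.
  have l2 : 2 * l != 0 by rewrite mulf_neq0 ?pnatr_eq0 // gt_eqF.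
  have u0 : 0 <= u by rewrite invr_ge0 mulr_ge0 // ltW.
  have eu : 2 * l * u = 1 by rewrite divff.
  have pw : forall x, A x <= l / 2 * B x + (u * g) * m x.
    move=> x; rewrite /A /B.
    apply: (@le_trans _ _ (\sum_(i < K) (l/2 * (q x i * M x i ^+ 2)
                     + u * (if 0 < M x i then q x i else 0)))).
      by apply: ler_sum => i _; apply: term_bound.
    rewrite big_split /= -mulr_sumr -mulr_sumr lerD2l -mulrA.
    apply: ler_wpM2l => //; apply: le_trans (qm x).
    by apply: ind_le_max => // i k; apply: hone.
  have hI := E_mono hE _ _ mA (meas_add hE _ _ (meas_scale hE (l/2) _ mB)
                                      (meas_scale hE (u * g) _ mm)) pw.
  rewrite (E_lin hE _ _ _ _ mB mm) in hI.
  have : 2 * l * mu1 E p eta EQ cls <= 2 * l * (l / 2 * E B + u * g * E m).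
    by rewrite ler_pM2l // mulr_gt0 // ltr0n.
  have -> : 2 * l * (l / 2 * E B + u * g * E m) = l ^+ 2 * E B + c.
    rewrite /c mulrDr !mulrA eu mul1r; congr (_ + _); by field.
  by move=> h; exact: h.
have risk : risk_opt E eta = 1 - E m.
  rewrite /risk_opt (_ : (fun x => _) = fun x => 1 * (fun _ => 1) x + (-1) * m x).
    by rewrite (E_lin hE _ _ _ _ (meas_cst hE 1) mm) (E1 hE) mul1r mulN1r.
  by apply: functional_extensionality => x; rewrite mul1r mulN1r.
rewrite risk lerD2l lerN2.
move: key; set a := mu1 E p eta EQ cls; set b := mu2 E p eta EQ cls; move=> key.
have a0 : a != 0 by rewrite gt_eqF.
have [b0|bp] := eqVneq b 0.
  have := key ((c + 1) / a); rewrite b0 mulr0 add0r.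
  rewrite divr_gt0 ?(ltr_pwDr ltr01) // => /(_ isT).
  rewrite -mulrA mulfVK //; lra.
have bpos : 0 < b by rewrite lt_def bp.
have := key (a / b); rewrite divr_gt0 // => /(_ isT).
have -> : (a / b) ^+ 2 * b = a ^+ 2 / b by field.
have -> : 2 * (a / b) * a = 2 * (a ^+ 2 / b) by field.
move=> hz.
have z0 : 0 < a ^+ 2 / b by rewrite divr_gt0 // exprn_gt0.
have zc : a ^+ 2 / b <= c by lra.
have gp : 0 < g.
  rewrite lt_def g0 andbT; apply/negP => /eqP g00.
  by move: zc; rewrite /c g00 mul0r; lra.
rewrite -(ler_pM2l gp) mulrA mulfV ?gt_eqF // mul1r.
exact: zc.
Qed.
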